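(* Let $f\in H^1(\mathbb S)$ and $\overline\omega\in\widehat L_2(\mathbb S)$. For $(x,y)\in\mathbb R^2\setminus\{(x,f(x)):x\in\mathbb R\}$ let $$V^1(x,y):=-\frac1{4\pi}\int_{-\pi}^{\pi}\overline\omega(s)\frac{\tanh((y-f(s))/2)\,[1+\tan^2((x-s)/2)]}{\tan^2((x-s)/2)+\tanh^2((y-f(s))/2)}\,ds,$$ $$V^2(x,y):=\frac1{4\pi}\int_{-\pi}^{\pi}\overline\omega(s)\frac{\tan((x-s)/2)\,[1-\tanh^2((y-f(s))/2)]}{\tan^2((x-s)/2)+\tanh^2((y-f(s))/2)}\,ds,$$ set $V:=(V^1,V^2)$, $\Omega_\pm:=\{(x,y)\in\mathbb R^2:\pm(f(x)-y)<0\}$ and $V_\pm:=V|_{\Omega_\pm}$. Then there exists a constant $C=C(\|f\|_\infty)>0$ such that $$|V_\pm(x,y)|\le C\|\overline\omega\|_1e^{-|y|/2}$$ for all $(x,y)\in\Omega_\pm$ with $|y|\ge 1+2\|f\|_\infty$.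
   Context: $\mathbb S:=\mathbb R/2\pi\mathbb Z$; functions on $\mathbb S$ are $2\pi$-periodic functions on $\mathbb R$. $H^1(\mathbb S)$ is the periodic Sobolev space, $\widehat L_2(\mathbb S):=\{h\in L_2(\mathbb S):\int_{-\pi}^{\pi}h\,dx=0\}$, and $\|\overline\omega\|_1:=\int_{-\pi}^{\pi}|\overline\omega|\,dx$. *)

(* Defs.v *)
From mathcomp Require Import all_boot all_order all_algebra.
From mathcomp Require Import all_classical all_reals all_analysis.
Set Implicit Arguments. Unset Strict Implicit. Unset Printing Implicit Defensive.
Import Order.TTheory GRing.Theory Num.Theory.
Local Open Scope classical_set_scope.
Local Open Scope ring_scope.

Section Defs.
Variable R : realType.

Definition lmu := (@lebesgue_measure R).

Definition tanh (x : R) : R := (expR x - expR (- x)) / (expR x + expR (- x)).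

(* 2pi-periodic functions = functions on S = R / 2piZ *)
Definition periodic2pi (f : R -> R) : Prop := forall x, f (x + 2 * pi) = f x.

(* square integrable on [-pi, pi] (measurability included in integrability) *)
Definition L2_period (g : R -> R) : Prop :=
  lmu.-integrable `[- pi, pi] (fun s => ((g s) ^+ 2)%:E).

(* H^1(S): (continuous representative of) a 2pi-periodic function which is
   absolutely continuous with square-integrable (weak) derivative g *)
Definition H1S (f : R -> R) : Prop :=
  periodic2pi f /\
  exists g : R -> R, L2_period g /\
    forall x, - pi <= x <= pi ->
      f x = f (- pi) + Rintegral lmu `[- pi, x] g.

Definition hatL2S (w : R -> R) : Prop :=
  periodic2pi w /\ L2_period w /\ Rintegral lmu `[- pi, pi] w = 0.

Definition supnorm (f : R -> R) : R := sup (range (fun x => `|f x|)).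

Definition norm1 (w : R -> R) : R := Rintegral lmu `[- pi, pi] (fun s => `|w s|).

Definition V1 (f w : R -> R) (x y : R) : R :=
  - (4 * pi)^-1 * Rintegral lmu `[- pi, pi] (fun s =>
      w s * (tanh ((y - f s) / 2) * (1 + (tan ((x - s) / 2)) ^+ 2))
          / ((tan ((x - s) / 2)) ^+ 2 + (tanh ((y - f s) / 2)) ^+ 2)).

Definition V2 (f w : R -> R) (x y : R) : R :=
  (4 * pi)^-1 * Rintegral lmu `[- pi, pi] (fun s =>
      w s * (tan ((x - s) / 2) * (1 - (tanh ((y - f s) / 2)) ^+ 2))
          / ((tan ((x - s) / 2)) ^+ 2 + (tanh ((y - f s) / 2)) ^+ 2)).

Definition normV (f w : R -> R) (x y : R) : R :=
  Num.sqrt (V1 f w x y ^+ 2 + V2 f w x y ^+ 2).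

(* Omega_+ (sign = true) and Omega_- (sign = false) *)
Definition Omega (sgn : bool) (f : R -> R) (x y : R) : Prop :=
  if sgn then f x - y < 0 else - (f x - y) < 0.

End Defs.

(* Main.v *)
Require Import Defs.
From mathcomp Require Import all_boot all_order all_algebra.
From mathcomp Require Import all_classical all_reals all_analysis.
From mathcomp Require Import ring lra.
Import Order.TTheory GRing.Theory Num.Theory.
Local Open Scope ring_scope.
Local Open Scope classical_set_scope.

Section S.
Variable R : realType.
Local Notation mu := (@lebesgue_measure R).
Local Notation Dpi := (`[(- pi)%R, (pi : R)%R] : set R).

Lemma int_split D (h : R -> R) :
  (\int[mu]_(x in D) (h x)%:E = \int[mu]_(x in D) (Num.max (h x) 0)%:E
     - \int[mu]_(x in D) (Num.max (- h x) 0)%:E)%E.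
Proof.
rewrite integralE; congr (_ - _)%E; apply: eq_integral => x _.
  by rewrite funeposE EFin_max.
by rewrite funenegE EFin_max.
Qed.

Lemma ereal_real (e : \bar R) (X : R) : (0 <= e)%E -> (e <= X%:E)%E ->
  exists a, e = a%:E /\ 0 <= a <= X.
Proof.
case: e => [a||] //=; rewrite ?lee_fin => a0 aX; first by exists a; rewrite a0 aX.
Qed.

Lemma core D (h : R -> R) X :
  (\int[mu]_(x in D) (Num.max (h x) 0)%:E <= X%:E)%E ->
  (\int[mu]_(x in D) (Num.max (- h x) 0)%:E <= X%:E)%E ->
  `|Rintegral mu D h| <= X.
Proof.
move=> Hp Hn; rewrite /Rintegral int_split.
have G1 : (0 <= \int[mu]_(x in D) (Num.max (h x) 0)%:E)%E.
  by apply: integral_ge0 => x _; rewrite lee_fin le_max lexx orbT.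
have G2 : (0 <= \int[mu]_(x in D) (Num.max (- h x) 0)%:E)%E.
  by apply: integral_ge0 => x _; rewrite lee_fin le_max lexx orbT.
have [p [-> /andP[p0 pX]]] := @ereal_real _ _ G1 Hp.
have [q [-> /andP[q0 qX]]] := @ereal_real _ _ G2 Hn.
rewrite -EFinB /=; rewrite ler_norml; apply/andP; split; lra.
Qed.
Lemma mono_int (D : set R) (f1 f2 : R -> \bar R) :
  (forall x, D x -> (0 <= f1 x)%E) -> (forall x, D x -> (f1 x <= f2 x)%E) ->
  (\int[mu]_(x in D) f1 x <= \int[mu]_(x in D) f2 x)%E.
Proof.
move=> f10 f12.
have f20 : forall x, D x -> (0 <= f2 x)%E.
  by move=> x Dx; exact: le_trans (f10 x Dx) (f12 x Dx).
rewrite (ge0_integralE mu f10) (ge0_integralE mu f20) /=.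
apply: ge_ereal_sup => _ [h /= hf <-].
apply: ereal_sup_ubound; exists h => //= x.
apply: le_trans (hf x) _.
rewrite /patch; case: ifP => // /set_mem Dx; exact: f12.
Qed.

Lemma scale_ge (D : set R) (f : R -> \bar R) (c : R) : 0 < c ->
  (forall x, D x -> (0 <= f x)%E) ->
  (c%:E * \int[mu]_(x in D) f x <= \int[mu]_(x in D) (c%:E * f x))%E.
Proof.
move=> c0 f0.
have cf0 : forall x, D x -> (0 <= c%:E * f x)%E.
  by move=> x Dx; apply: mule_ge0; [rewrite lee_fin ltW| exact: f0].
rewrite (ge0_integralE mu f0) (ge0_integralE mu cf0) /=.
set S := ereal_sup _.
rewrite -lee_pdivlMl //.
apply: ge_ereal_sup => _ [h /= hf <-].
rewrite lee_pdivlMl //.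
rewrite -sintegralrM.
apply: ereal_sup_ubound; exists (scale_nnsfun h (ltW c0)) => //= x.
have := hf x; rewrite /patch; case: ifP => _.
  by move=> H; rewrite EFinM lee_pmul2l ?lte_fin.
by rewrite !lee_fin => H; rewrite pmulr_rle0.
Qed.

Lemma scale_eq (D : set R) (f : R -> \bar R) (c : R) : 0 < c ->
  (forall x, D x -> (0 <= f x)%E) ->
  (\int[mu]_(x in D) (c%:E * f x) = c%:E * \int[mu]_(x in D) f x)%E.
Proof.
move=> c0 f0; apply/eqP; rewrite eq_le scale_ge // andbT.
have cf0 : forall x, D x -> (0 <= c%:E * f x)%E.
  by move=> x Dx; apply: mule_ge0; [rewrite lee_fin ltW| exact: f0].
have := @scale_ge D _ c^-1 (ltac:(by rewrite invr_gt0)) cf0.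
have -> : (\int[mu]_(x in D) ((c^-1)%:E * (c%:E * f x)) = \int[mu]_(x in D) f x)%E.
  by apply: eq_integral => x _; rewrite muleA -EFinM mulVf ?gt_eqF // mul1e.
move=> H; rewrite -(@lee_pmul2l _ (c^-1)%:E) ?lte_fin ?invr_gt0 //.
by rewrite muleA -EFinM mulVf ?gt_eqF // mul1e.
Qed.

Lemma max_mul (w k : R) : 0 <= k -> Num.max (w * k) 0 = k * Num.max w 0.
Proof.
move=> k0; have [h|h] := boolP (0 <= w).
  by rewrite (max_idPl h) (max_idPl (mulr_ge0 h k0)) mulrC.
have h' : w <= 0 by rewrite leNgt; apply: contra h => /ltW.
rewrite (max_idPr h') mulr0; apply/max_idPr.
by rewrite mulrC mulr_ge0_le0.
Qed.

Lemma band D (g m : R -> R) (a d : R) :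
  (forall x, D x -> 0 <= g x) -> (forall x, D x -> 0 <= m x /\ `|m x - 1| <= d) ->
  0 <= d -> (\int[mu]_(x in D) (g x)%:E = a%:E)%E ->
  exists p, (\int[mu]_(x in D) (m x * g x)%:E = p%:E)%E /\ (1 - d) * a <= p <= (1 + d) * a.
Proof.
move=> g0 md d0 Ea.
have a0 : 0 <= a.
  by rewrite -lee_fin -Ea; apply: integral_ge0 => x Dx; rewrite lee_fin g0.
have G1 : (0 <= \int[mu]_(x in D) (m x * g x)%:E)%E.
  by apply: integral_ge0 => x Dx; rewrite lee_fin mulr_ge0 //; [case: (md x Dx)|exact: g0].
have Up : (\int[mu]_(x in D) (m x * g x)%:E <= ((1 + d) * a)%:E)%E.
  rewrite EFinM -Ea -scale_eq; last by move=> x Dx; rewrite lee_fin g0.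
    apply: mono_int => x Dx; first by rewrite lee_fin mulr_ge0 //; [case: (md x Dx)|exact: g0].
    rewrite -EFinM lee_fin ler_wpM2r //; first exact: g0.
    case: (md x Dx) => _; rewrite ler_norml => /andP[_]; lra.
  lra.
have [p [Ep /andP[p0 pX]]] := @ereal_real _ _ G1 Up.
exists p; split => //; rewrite pX andbT.
have [d1|d1] := ltP d 1; last by apply: le_trans p0; rewrite mulr_le0_ge0 //; lra.
rewrite -lee_fin -Ep EFinM -Ea -scale_eq; last by move=> x Dx; rewrite lee_fin g0.
  apply: mono_int => x Dx.
    by rewrite -EFinM lee_fin mulr_ge0 //; [lra|exact: g0].
  rewrite -EFinM lee_fin ler_wpM2r //; first exact: g0.
  case: (md x Dx) => _; rewrite ler_norml => /andP[+ _]; lra.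
lra.
Qed.

Lemma dom D (h w : R -> R) (c W : R) :
  (\int[mu]_(x in D) (`|w x|)%:E = W%:E)%E -> 0 < c ->
  (forall x, D x -> `|h x| <= c * `|w x|) ->
  `|Rintegral mu D h| <= c * W.
Proof.
move=> EW c0 hw.
have E : (\int[mu]_(x in D) (c%:E * (`|w x|)%:E) = (c * W)%:E)%E.
  by rewrite scale_eq // ?EW // => x _; rewrite lee_fin.
apply: core; rewrite -E; apply: mono_int => x Dx.
- by rewrite lee_fin le_max lexx orbT.
- rewrite -EFinM lee_fin ge_max (mulr_ge0 (ltW c0) (normr_ge0 _)) andbT.
  exact: le_trans (ler_norm _) (hw x Dx).
- by rewrite lee_fin le_max lexx orbT.
- rewrite -EFinM lee_fin ge_max (mulr_ge0 (ltW c0) (normr_ge0 _)) andbT.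
  by apply: le_trans (hw x Dx); rewrite -normrN ler_norm.
Qed.

Lemma cancel_lem D (w k : R -> R) (s d W : R) :
  (\int[mu]_(x in D) (`|w x|)%:E = W%:E)%E -> Rintegral mu D w = 0 ->
  0 <= d -> (s = 1 \/ s = -1) ->
  (forall x, D x -> 0 <= s * k x /\ `|s * k x - 1| <= d) ->
  `|Rintegral mu D (fun x => w x * k x)| <= 2 * d * W.
Proof.
move=> EW Iw d0 s1 kd.
have W0 : 0 <= W.
  by rewrite -lee_fin -EW; apply: integral_ge0 => x Dx; rewrite lee_fin.
have G1 : (0 <= \int[mu]_(x in D) (Num.max (w x) 0)%:E)%E.
  by apply: integral_ge0 => x _; rewrite lee_fin le_max lexx orbT.
have G2 : (0 <= \int[mu]_(x in D) (Num.max (- w x) 0)%:E)%E.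
  by apply: integral_ge0 => x _; rewrite lee_fin le_max lexx orbT.
have U1 : (\int[mu]_(x in D) (Num.max (w x) 0)%:E <= W%:E)%E.
  rewrite -EW; apply: mono_int => x Dx; rewrite lee_fin ?le_max ?lexx ?orbT //.
  by rewrite ge_max normr_ge0 ler_norm.
have U2 : (\int[mu]_(x in D) (Num.max (- w x) 0)%:E <= W%:E)%E.
  rewrite -EW; apply: mono_int => x Dx; rewrite lee_fin ?le_max ?lexx ?orbT //.
  by rewrite ge_max normr_ge0 -normrN ler_norm.
have [a [Ea /andP[a0 aW]]] := @ereal_real _ _ G1 U1.
have [b [Eb /andP[b0 bW]]] := @ereal_real _ _ G2 U2.
have ab : a = b.
  by move: Iw; rewrite /Rintegral int_split Ea Eb -EFinB /= => /eqP; rewrite subr_eq0 => /eqP.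
have md : forall x, D x -> 0 <= s * k x /\ `|s * k x - 1| <= d by [].
have [p [Ep /andP[p1 p2]]] := @band _ _ (fun x => s * k x) _ _ (fun x _ => (ltac:(by rewrite le_max lexx orbT) : 0 <= Num.max (w x) 0)) md d0 Ea.
have [q [Eq /andP[q1 q2]]] := @band _ _ (fun x => s * k x) _ _ (fun x _ => (ltac:(by rewrite le_max lexx orbT) : 0 <= Num.max (- w x) 0)) md d0 Eb.
have key : `|p - q| <= 2 * d * W.
  subst b; have : d * a <= d * W by rewrite ler_wpM2l.
  move=> daW; rewrite ler_norml; move: p1 p2 q1 q2.
  rewrite !mulrDl ?mulrBl ?mulNr !mul1r => p1 p2 q1 q2.
  apply/andP; split; lra.
rewrite /Rintegral int_split.
case: s1 => s1; subst s.
- have -> : (\int[mu]_(x in D) (Num.max (w x * k x) 0)%:E = p%:E)%E.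
    rewrite -Ep; apply: eq_integral => x /set_mem Dx /=.
    by rewrite max_mul ?mul1r //; have := (kd x Dx).1; rewrite mul1r.
  have -> : (\int[mu]_(x in D) (Num.max (- (w x * k x)) 0)%:E = q%:E)%E.
    rewrite -Eq; apply: eq_integral => x /set_mem Dx /=.
    by rewrite -mulNr max_mul ?mul1r //; have := (kd x Dx).1; rewrite mul1r.
  by rewrite -EFinB /=.
- have -> : (\int[mu]_(x in D) (Num.max (w x * k x) 0)%:E = q%:E)%E.
    rewrite -Eq; apply: eq_integral => x /set_mem Dx /=.
    by rewrite -mulrNN max_mul ?mulN1r //; have := (kd x Dx).1; rewrite mulN1r.
  have -> : (\int[mu]_(x in D) (Num.max (- (w x * k x)) 0)%:E = p%:E)%E.
    rewrite -Ep; apply: eq_integral => x /set_mem Dx /=.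
    by rewrite -mulrN max_mul ?mulN1r //; have := (kd x Dx).1; rewrite mulN1r.
  by rewrite -EFinB /= -normrN opprB.
Qed.

Lemma mono_sub (A B : set R) (f : R -> \bar R) : A `<=` B ->
  (forall x, B x -> (0 <= f x)%E) ->
  (\int[mu]_(x in A) f x <= \int[mu]_(x in B) f x)%E.
Proof.
move=> AB f0; rewrite (@integral_mkcond _ _ _ mu A f) (@integral_mkcond _ _ _ mu B f).
apply: mono_int => x _; rewrite /patch.
  by case: ifP => [/set_mem Ax|_] //; apply: f0; apply: AB.
case: ifP => [/set_mem Ax|_]; last by case: ifP => // /set_mem/f0.
by rewrite ifT //; apply/mem_set; apply: AB.
Qed.

Lemma L2fin (h : R -> R) : L2_period h ->
  exists X, (\int[mu]_(x in Dpi) (1 + h x ^+ 2)%:E = X%:E)%E.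
Proof.
move=> Ih; have /integrableP [mh2 _] := Ih.
have mD : measurable Dpi by [].
have F : (\int[mu]_(x in Dpi) (h x ^+ 2)%:E)%E \is a fin_num.
  by apply: integrable_fin_num.
have -> : (\int[mu]_(x in Dpi) (1 + h x ^+ 2)%:E = \int[mu]_(x in Dpi) (cst 1%:E x + (h x ^+ 2)%:E))%E.
  by apply: eq_integral => x _; rewrite EFinD.
rewrite ge0_integralD //; last by move=> x _; rewrite lee_fin sqr_ge0.
rewrite integral_cst //.
have Hm : mu Dpi = (pi + pi)%:E.
  rewrite lebesgue_measure_itv /= lte_fin ifT; last by have := @pi_gt0 R; lra.
  by rewrite opprK EFinD.
rewrite -[X in (X + _)%E]/((1 * mu Dpi)%E) Hm.
exists (pi + pi + fine (\int[mu]_(x in Dpi) (h x ^+ 2)%:E)%E).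
rewrite mul1e !EFinD fineK //.
Qed.

Lemma abs_le_sq (a : R) : `|a| <= 1 + a ^+ 2.
Proof. rewrite -real_normK ?num_real //; have := normr_ge0 a; nra. Qed.

Lemma Wlem (w : R -> R) : L2_period w ->
  (\int[mu]_(x in Dpi) (`|w x|)%:E = (norm1 w)%:E)%E.
Proof.
move=> Lw; have [X EX] := @L2fin _ Lw.
have G1 : (0 <= \int[mu]_(x in Dpi) (`|w x|)%:E)%E.
  by apply: integral_ge0 => x _; rewrite lee_fin.
have U : (\int[mu]_(x in Dpi) (`|w x|)%:E <= X%:E)%E.
  by rewrite -EX; apply: mono_int => x _; rewrite lee_fin ?abs_le_sq.
have [a [Ea _]] := @ereal_real _ _ G1 U.
by rewrite /norm1 /Rintegral Ea.
Qed.

Lemma fbound (f : R -> R) : H1S f -> exists B, forall x, `|f x| <= B.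
Proof.
move=> [per [g [Lg Hf]]].
have [X EX] := @L2fin _ Lg.
have B0 : forall x, - pi <= x <= pi -> `|f x| <= `|f (- pi)| + X.
  move=> x /[dup] hx /andP[x1 x2]; rewrite (Hf x hx).
  apply: le_trans (ler_normD _ _) _; rewrite lerD2l.
  have sub : (`[(- pi)%R, x] : set R) `<=` Dpi.
    by move=> z; rewrite /= !in_itv /= => /andP[z1 z2]; apply/andP; split => //; lra.
  apply: core.
    apply: (@le_trans _ _ (\int[mu]_(z in Dpi) (Num.max (g z) 0)%:E)%E).
      by apply: mono_sub => // z _; rewrite lee_fin le_max lexx orbT.
    rewrite -EX; apply: mono_int => z _.
      by rewrite lee_fin le_max lexx orbT.
    rewrite lee_fin ge_max (le_trans (normr_ge0 (g z)) (abs_le_sq _)) andbT.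
    exact: le_trans (ler_norm _) (abs_le_sq (g z)).
  apply: (@le_trans _ _ (\int[mu]_(z in Dpi) (Num.max (- g z) 0)%:E)%E).
    by apply: mono_sub => // z _; rewrite lee_fin le_max lexx orbT.
  rewrite -EX; apply: mono_int => z _.
    by rewrite lee_fin le_max lexx orbT.
  rewrite lee_fin ge_max (le_trans (normr_ge0 (g z)) (abs_le_sq _)) andbT.
  by apply: le_trans (abs_le_sq (g z)); rewrite -normrN ler_norm.
exists (`|f (- pi)| + X).
have pi2 := @pi_ge2 R.
have ind : forall n : nat, forall x, `|x| <= (2 * n%:R + 1) * pi -> `|f x| <= `|f (- pi)| + X.
  elim=> [|n IH] x hx.
    by apply: B0; rewrite -ler_norml; move: hx; rewrite mulr0 add0r mul1r.
  move: hx; rewrite ler_norml -natr1 => /andP[h1 h2].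
  have n0 : 0 <= n%:R * pi :> R by rewrite mulr_ge0 // pi_ge0.
  have [h3|h3] := lerP x pi; have [h4|h4] := lerP (- pi) x.
  - by apply: B0; rewrite h3 h4.
  - rewrite -per; apply: IH; rewrite ler_norml; apply/andP; split; lra.
  - rewrite -[x](subrK (2 * pi)) per; apply: IH; rewrite ler_norml; apply/andP; split; lra.
  - lra.
move=> x; apply: (ind (Num.Def.archi_bound `|x|)).
have := archi_boundP (normr_ge0 x).
have : 0 <= (Num.Def.archi_bound `|x|)%:R :> R by [].
nra.
Qed.
Lemma kern (v t E e : R) : 0 < E -> E <= 2/3 -> E <= e -> v * (1 + E) = 1 - E ->
  [/\ 0 <= v * (1 + t^+2) / (t^+2 + v^+2),
      `|v * (1 + t^+2) / (t^+2 + v^+2) - 1| <= 50 * e &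
      `|t * (1 - v^+2) / (t^+2 + v^+2)| <= 10 * e].
Proof.
move=> E0 E23 Ee hv.
have v15 : 1/5 <= v by nra.
have v1 : v <= 1 by nra.
have v2 : 1 - v <= 2 * E by nra.
have t2 : 0 <= t^+2 by rewrite sqr_ge0.
set d := t^+2 + v^+2.
have d0 : 0 < d by rewrite /d; nra.
have dv : 1/25 <= d by rewrite /d; nra.
split.
- apply: divr_ge0; [apply: mulr_ge0; lra | exact: ltW].
- set q := v * (1 + t^+2) / d.
  have hq : (q - 1) * d = (1 - v) * (v - t^+2) by rewrite /q mulrBl divfK ?gt_eqF // mul1r /d; ring.
  have e1 : (1 - v) * (v - t^+2) <= 50 * e * d.
    have : (1 - v) * (v - t^+2) <= 2 * E by nra.
    have : e * (1/25) <= e * d by apply: ler_wpM2l; lra.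
    lra.
  have e2 : - (50 * e * d) <= (1 - v) * (v - t^+2).
    have : - ((1 - v) * (v - t^+2)) <= 2 * E * t^+2 by nra.
    have : E * t^+2 <= e * t^+2 by rewrite ler_wpM2r.
    have : e * t^+2 <= e * d.
      by apply: ler_wpM2l; [lra | rewrite /d; have := sqr_ge0 v; lra].
    have : 0 <= e * d by rewrite mulr_ge0; lra.
    lra.
  rewrite ler_norml; apply/andP; split.
  + rewrite -(ler_pM2r d0) mulNr hq; exact: e2.
  + rewrite -(ler_pM2r d0) hq; exact: e1.
- rewrite !normrM normfV (ger0_norm (ltW d0)) ler_pdivrMr //.
  have a0 := normr_ge0 t.
  have ta : t^+2 = `|t|^+2 by rewrite real_normK ?num_real.
  have w1 : 0 <= 1 - v^+2 by nra.
  rewrite (ger0_norm w1).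
  have : 1 - v^+2 <= 4 * E by nra.
  have : 2 * `|t| <= 5 * d by rewrite /d ta; have := sqr_ge0 (`|t| - 1/5); nra.
  nra.
Qed.

Lemma tanhN (a : R) : tanh (- a) = - tanh a.
Proof. rewrite /tanh opprK -mulNr opprB; congr (_ / _); exact: addrC. Qed.

Lemma tanh_pos (z : R) : tanh (z / 2) * (1 + expR (- z)) = 1 - expR (- z).
Proof.
rewrite /tanh.
have P0 := expR_gt0 (z / 2).
have Ez : expR (- z) = (expR (z/2) * expR (z/2))^-1.
  by rewrite expRN -expRD -splitr.
have EN : expR (- (z/2)) = (expR (z/2))^-1 by rewrite expRN.
rewrite Ez EN; set P := expR (z/2).
have Pn : P != 0 by rewrite gt_eqF.
have Pn2 : P ^+ 2 + 1 != 0 by rewrite gt_eqF //; have := sqr_ge0 P; lra.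
have PP : P * P + 1 != 0 by rewrite gt_eqF //; have := sqr_ge0 P; rewrite expr2; lra.
have PP2 : P + P^-1 != 0 by rewrite gt_eqF // addr_gt0 // invr_gt0.
field; by rewrite Pn PP.
Qed.

Lemma Ebound (z c : R) : 1/2 <= c -> c <= `|z| -> expR (- `|z|) <= 2/3 /\ expR (- `|z|) <= expR (- (c - 1/2)).
Proof.
move=> c1 cz; split; last by rewrite ler_expR; lra.
apply: (@le_trans _ _ (expR (- (1/2)))); first by rewrite ler_expR; lra.
rewrite expRN; have := expR_ge1Dx (1/2 : R) => h.
rewrite -[(expR _)^-1]mul1r ler_pdivrMr ?expR_gt0 //; lra.
Qed.

Lemma point (M y fs xs : R) : `|fs| <= M -> 1 + 2 * M <= `|y| ->
  let s := (if 0 <= y then 1 else -1 : R) in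
  let t := tan (xs / 2) in let u := tanh ((y - fs) / 2) in
  [/\ 0 <= s * ((u * (1 + t^+2)) / (t^+2 + u^+2)),
      `|s * ((u * (1 + t^+2)) / (t^+2 + u^+2)) - 1| <= 50 * expR (- (`|y| / 2)) &
      `|(t * (1 - u^+2)) / (t^+2 + u^+2)| <= 10 * expR (- (`|y| / 2))].
Proof.
move=> hf hy s t u.
have M0 : 0 <= M by apply: le_trans hf.
set z := y - fs.
have [v [hv uv]] : exists v, v * (1 + expR (- `|z|)) = 1 - expR (- `|z|) /\ s * u = v.
  rewrite /s /u /z; case: ifP => y0.
  - exists (tanh ((y - fs)/2)); split; last by rewrite mul1r.
    have z0 : 0 <= y - fs.
      move: hf hy; rewrite (ger0_norm y0) ler_norml => /andP[h1 h2]; lra.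
    by rewrite (ger0_norm z0) tanh_pos.
  - exists (tanh ((- (y - fs))/2)); split; last by rewrite mulN1r -tanhN mulNr.
    have z0 : y - fs <= 0.
      have y0' : y < 0 by rewrite ltNge y0.
      move: hf hy; rewrite (ltr0_norm y0') ler_norml => /andP[h1 h2]; lra.
    by rewrite (ler0_norm z0) tanh_pos.
have zc : `|y| / 2 + 1/2 <= `|z|.
  rewrite /z; move: hf; rewrite ler_norml => /andP[h1 h2].
  have [y0|y0] := boolP (0 <= y).
  - rewrite (ger0_norm y0) in hy *; apply: le_trans (ler_norm _); lra.
  - have y0' : y < 0 by rewrite ltNge.
    rewrite (ltr0_norm y0') in hy *; rewrite -normrN; apply: le_trans (ler_norm _); lra.
have c1 : 1/2 <= `|y|/2 + 1/2 by have := normr_ge0 y; lra.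
have [E23 Ee] := @Ebound z _ c1 zc.
have s2 : s ^+ 2 = 1 by rewrite /s; case: ifP => _; rewrite ?expr1n ?sqrrN ?expr1n.
have uv2 : u ^+ 2 = v ^+ 2.
  by rewrite -uv [(s * u) ^+ 2]exprMn s2 mul1r.
have Ee' : expR (- `|z|) <= expR (- (`|y| / 2)) by move: Ee; congr (_ <= expR _); lra.
have [k1 k2 k3] := @kern v t _ _ (expR_gt0 _) E23 Ee' hv.
have -> : s * (u * (1 + t ^+ 2) / (t ^+ 2 + u ^+ 2)) = v * (1 + t ^+ 2) / (t ^+ 2 + v ^+ 2).
  by rewrite uv2 -uv !mulrA.
by rewrite uv2; split.
Qed.

Lemma sqrt_le (a b : R) : Num.sqrt (a ^+ 2 + b ^+ 2) <= `|a| + `|b|.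
Proof.
rewrite -[X in _ <= X]ger0_norm ?addr_ge0 // -sqrtr_sqr; apply: ler_wsqrtr.
rewrite sqrrD -[a ^+ 2]real_normK ?num_real // -[b ^+ 2]real_normK ?num_real //.
have := mulr_ge0 (normr_ge0 a) (normr_ge0 b); lra.
Qed.

Lemma supb (f : R -> R) : H1S f -> forall s, `|f s| <= supnorm f.
Proof.
move=> Hf s; have [B HB] := @fbound _ Hf.
rewrite /supnorm; apply: sup_upper_bound; last by exists s.
split; first by exists `|f 0|, 0.
by exists B => _ [z _ <-]; exact: HB.
Qed.
End S.

Theorem lemma2p1 (R : realType) (M : R) :
  exists C : R, 0 < C /\
    forall (f w : R -> R), H1S f -> hatL2S w -> supnorm f = M ->
    forall (sgn : bool) (x y : R), Omega sgn f x y ->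
      1 + 2 * supnorm f <= `|y| ->
      normV f w x y <= C * norm1 w * expR (- (`|y| / 2)).
Proof.
exists (110 * (4 * pi)^-1); split.
  by rewrite mulr_gt0 // invr_gt0 mulr_gt0 // pi_gt0.
move=> f w Hf [_ [Lw Iw]] _ sgn x y _ hy.
have Bf := @supb R _ Hf.
have EW := @Wlem R _ Lw.
set e := expR (- (`|y| / 2)).
have e0 : 0 < e by rewrite expR_gt0.
set sg := (if 0 <= y then 1 else -1 : R).
have I1 : `|Rintegral lebesgue_measure `[- pi, pi] (fun s =>
      w s * (tanh ((y - f s) / 2) * (1 + (tan ((x - s) / 2)) ^+ 2))
          / ((tan ((x - s) / 2)) ^+ 2 + (tanh ((y - f s) / 2)) ^+ 2))| <= 2 * (50 * e) * norm1 w.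
  have -> : (fun s => w s * (tanh ((y - f s) / 2) * (1 + (tan ((x - s) / 2)) ^+ 2))
          / ((tan ((x - s) / 2)) ^+ 2 + (tanh ((y - f s) / 2)) ^+ 2)) =
     (fun s => w s * ((tanh ((y - f s) / 2) * (1 + (tan ((x - s) / 2)) ^+ 2))
          / ((tan ((x - s) / 2)) ^+ 2 + (tanh ((y - f s) / 2)) ^+ 2))).
    by apply: funext => s; rewrite -mulrA.
  apply: (@cancel_lem R _ _ _ sg) => //.
  - by rewrite mulr_ge0 // ltW.
  - by rewrite /sg; case: ifP; [left|right].
  - by move=> s _; have [p1 p2 _] := @point R _ _ _ (x - s) (Bf s) hy.
have I2 : `|Rintegral lebesgue_measure `[- pi, pi] (fun s =>
      w s * (tan ((x - s) / 2) * (1 - (tanh ((y - f s) / 2)) ^+ 2))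
          / ((tan ((x - s) / 2)) ^+ 2 + (tanh ((y - f s) / 2)) ^+ 2))| <= (10 * e) * norm1 w.
  apply: (@dom R _ _ w) => //; first by rewrite mulr_gt0.
  move=> s _; rewrite -mulrA normrM mulrC ler_wpM2r //.
  by have [_ _ p3] := @point R _ _ _ (x - s) (Bf s) hy.
rewrite /normV; apply: (le_trans (@sqrt_le R _ _)).
rewrite /V1 /V2 !normrM normrN.
have pi0 : 0 < (4 * pi)^-1 :> R by rewrite invr_gt0 mulr_gt0 // pi_gt0.
rewrite (gtr0_norm pi0).
have := ler_wpM2l (ltW pi0) I1; have := ler_wpM2l (ltW pi0) I2.
lra.
Qed.
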